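(* Let $\varphi$ and $\psi$ be metric formulas without implication. Then, in MHT, $\varphi\equiv\psi$ iff $\delta(\varphi)\equiv\delta(\psi)$.
   Context: Metric formulas over $\mathcal{A}$: $\varphi ::= p \mid \bot \mid \varphi_1\otimes\varphi_2 \mid \bullet_I\varphi \mid \varphi_1\,\mathsf{S}_I\,\varphi_2 \mid \varphi_1\,\mathsf{T}_I\,\varphi_2 \mid \bigcirc_I\varphi \mid \varphi_1\,\mathsf{U}_I\,\varphi_2 \mid \varphi_1\,\mathsf{R}_I\,\varphi_2$, $\otimes\in\{\to,\wedge,\vee\}$, $I=[m,n)$. Derived: $\top=\neg\bot$, $\blacksquare_I\varphi=\bot\,\mathsf{T}_I\,\varphi$, eventually before $=\top\,\mathsf{S}_I\,\varphi$, $\widehat{\bullet}_I\varphi=\bullet_I\varphi\vee\neg\bullet_I\top$, $\Box_I\varphi=\bot\,\mathsf{R}_I\,\varphi$, $\Diamond_I\varphi=\top\,\mathsf{U}_I\,\varphi$, $\widehat{\bigcirc}_I\varphi=\bigcirc_I\varphi\vee\neg\bigcirc_I\top$. Timed HT-trace $\mathbf{M}=(\langle\mathbf{H},\mathbf{T}\rangle,\tau)$: $H_i\subseteq T_i\subseteq\mathcal{A}$, $\tau:[0,\lambda)\to\mathbb{N}$, $\tau(0)=0$, $\tau(i)\le\tau(i+1)$. Satisfaction at $k$: $\bot$ never; $p$ iff $p\in H_k$; $\wedge,\vee$ usual; $\varphi\to\psi$ iff for both $\mathbf{M}'=\mathbf{M}$ and $\mathbf{M}'=(\langle\mathbf{T},\mathbf{T}\rangle,\tau)$,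 $\mathbf{M}',k\not\models\varphi$ or $\mathbf{M}',k\models\psi$; $\bullet_I$, $\mathsf{S}_I$, $\mathsf{T}_I$, $\bigcirc_I$, $\mathsf{U}_I$, $\mathsf{R}_I$: $\bullet_I\varphi$ iff $k>0$, $\varphi$ at $k-1$, $\tau(k)-\tau(k-1)\in I$; $\varphi\,\mathsf{S}_I\,\psi$ iff some $j\in[0,k]$ with $\tau(k)-\tau(j)\in I$, $\psi$ at $j$, $\varphi$ at all $i\in(j,k]$; $\varphi\,\mathsf{T}_I\,\psi$ iff for all such $j$, $\psi$ at $j$ or $\varphi$ at some $i\in(j,k]$; $\bigcirc_I\varphi$ iff $k+1<\lambda$, $\varphi$ at $k+1$, $\tau(k+1)-\tau(k)\in I$; $\varphi\,\mathsf{U}_I\,\psi$ iff some $j\in[k,\lambda)$ with $\tau(j)-\tau(k)\in I$, $\psi$ at $j$, $\varphi$ at all $i\in[k,j)$; $\varphi\,\mathsf{R}_I\,\psi$ iff for all such $j$, $\psi$ at $j$ or $\varphi$ at some $i\in[k,j)$. $\varphi\equiv\psi$ in MHT iff $\mathbf{M},k\models\varphi\leftrightarrow\psi$ for all timed HT-traces and all $k$. For an implication-free formula $\varphi$, $\delta(\varphi)$ replaces each connective by its dual: $\top/\bot$, $\wedge/\vee$, $\mathsf{U}_I/\mathsf{R}_I$, $\bigcirc_I/\widehat{\bigcirc}_I$, $\Box_I/\Diamond_I$, $\mathsf{S}_I/\mathsf{T}_I$, $\bullet_I/\widehat{\bullet}_I$, $\blacksquare_I$ / eventually before ($\top\,\mathsf{S}_I\,\cdot$).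 *)

(* Defs.v *)
From Stdlib Require Import Arith.
Set Implicit Arguments.

(* Intervals J = [m, n) with m : nat and n : nat or omega (None = omega). *)
Record interval := Intv { lo : nat; hi : option nat }.

Definition in_int (J : interval) (d : nat) : Prop :=
  lo J <= d /\ match hi J with None => True | Some n => d < n end.

(* Trace length lambda : nat or omega (None = omega); position i is in [0,lambda). *)
Definition in_trace (lam : option nat) (i : nat) : Prop :=
  match lam with None => True | Some n => i < n end.

Section Syntax.
Variable A : Type.

Inductive formula : Type :=
| Atom : A -> formula
| Bot : formula
| Impl : formula -> formula -> formula
| And : formula -> formula -> formula
| Or : formula -> formula -> formula
| Prev : interval -> formula -> formula
| Since : interval -> formula -> formula -> formula
| Trigger : interval -> formula -> formula -> formula
| Next : interval -> formula -> formula
| Until : interval -> formula -> formula -> formula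
| Release : interval -> formula -> formula -> formula.

Definition Neg (f : formula) : formula := Impl f Bot.
Definition Top : formula := Neg Bot.
Definition Iff (f g : formula) : formula := And (Impl f g) (Impl g f).
Definition WPrev (J : interval) (f : formula) : formula :=
  Or (Prev J f) (Neg (Prev J Top)).
Definition WNext (J : interval) (f : formula) : formula :=
  Or (Next J f) (Neg (Next J Top)).
Definition Always (J : interval) (f : formula) : formula := Release J Bot f.
Definition Eventually (J : interval) (f : formula) : formula := Until J Top f.
Definition AlwaysBefore (J : interval) (f : formula) : formula := Trigger J Bot f.
Definition EventuallyBefore (J : interval) (f : formula) : formula := Since J Top f.

(* Box/Diamond/AlwaysBefore/EventuallyBefore are
   expressible as R/U/T/S with Bot/Top as first argument. *)
Inductive iformula : Type :=
| IAtom : A -> iformula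
| IBot : iformula
| ITop : iformula
| IAnd : iformula -> iformula -> iformula
| IOr : iformula -> iformula -> iformula
| IPrev : interval -> iformula -> iformula
| IWPrev : interval -> iformula -> iformula
| ISince : interval -> iformula -> iformula -> iformula
| ITrigger : interval -> iformula -> iformula -> iformula
| INext : interval -> iformula -> iformula
| IWNext : interval -> iformula -> iformula
| IUntil : interval -> iformula -> iformula -> iformula
| IRelease : interval -> iformula -> iformula -> iformula.

Fixpoint emb (f : iformula) : formula :=
  match f with
  | IAtom p => Atom p
  | IBot => Bot
  | ITop => Top
  | IAnd f g => And (emb f) (emb g)
  | IOr f g => Or (emb f) (emb g)
  | IPrev J f => Prev J (emb f)
  | IWPrev J f => WPrev J (emb f)
  | ISince J f g => Since J (emb f) (emb g)
  | ITrigger J f g => Trigger J (emb f) (emb g)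
  | INext J f => Next J (emb f)
  | IWNext J f => WNext J (emb f)
  | IUntil J f g => Until J (emb f) (emb g)
  | IRelease J f g => Release J (emb f) (emb g)
  end.

Fixpoint delta (f : iformula) : iformula :=
  match f with
  | IAtom p => IAtom p
  | IBot => ITop
  | ITop => IBot
  | IAnd f g => IOr (delta f) (delta g)
  | IOr f g => IAnd (delta f) (delta g)
  | IPrev J f => IWPrev J (delta f)
  | IWPrev J f => IPrev J (delta f)
  | ISince J f g => ITrigger J (delta f) (delta g)
  | ITrigger J f g => ISince J (delta f) (delta g)
  | INext J f => IWNext J (delta f)
  | IWNext J f => INext J (delta f)
  | IUntil J f g => IRelease J (delta f) (delta g)
  | IRelease J f g => IUntil J (delta f) (delta g)
  end.

Fixpoint sat (H T : nat -> A -> Prop) (lam : option nat) (tau : nat -> nat)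
    (k : nat) (f : formula) {struct f} : Prop :=
  match f with
  | Atom p => H k p
  | Bot => False
  | Impl f1 f2 =>
      (sat H T lam tau k f1 -> sat H T lam tau k f2) /\
      (sat T T lam tau k f1 -> sat T T lam tau k f2)
  | And f1 f2 => sat H T lam tau k f1 /\ sat H T lam tau k f2
  | Or f1 f2 => sat H T lam tau k f1 \/ sat H T lam tau k f2
  | Prev J f1 =>
      0 < k /\ sat H T lam tau (k - 1) f1 /\ in_int J (tau k - tau (k - 1))
  | Since J f1 f2 =>
      exists j, j <= k /\ in_int J (tau k - tau j) /\ sat H T lam tau j f2 /\
        forall i, j < i -> i <= k -> sat H T lam tau i f1
  | Trigger J f1 f2 =>
      forall j, j <= k -> in_int J (tau k - tau j) ->
        sat H T lam tau j f2 \/ exists i, j < i /\ i <= k /\ sat H T lam tau i f1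
  | Next J f1 =>
      in_trace lam (k + 1) /\ sat H T lam tau (k + 1) f1 /\
      in_int J (tau (k + 1) - tau k)
  | Until J f1 f2 =>
      exists j, k <= j /\ in_trace lam j /\ in_int J (tau j - tau k) /\
        sat H T lam tau j f2 /\ forall i, k <= i -> i < j -> sat H T lam tau i f1
  | Release J f1 f2 =>
      forall j, k <= j -> in_trace lam j -> in_int J (tau j - tau k) ->
        sat H T lam tau j f2 \/ exists i, k <= i /\ i < j /\ sat H T lam tau i f1
  end.

Record htrace := HTrace {
  trH : nat -> A -> Prop;
  trT : nat -> A -> Prop;
  trlam : option nat;
  trtau : nat -> nat;
  tr_nonempty : in_trace trlam 0;
  tr_HT : forall i p, in_trace trlam i -> trH i p -> trT i p;
  tr_tau0 : trtau 0 = 0;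
  tr_mono : forall i, in_trace trlam (i + 1) -> trtau i <= trtau (i + 1)
}.

Definition msat (M : htrace) (k : nat) (f : formula) : Prop :=
  sat (trH M) (trT M) (trlam M) (trtau M) k f.

Definition mht_equiv (f g : formula) : Prop :=
  forall (M : htrace) (k : nat), in_trace (trlam M) k -> msat M k (Iff f g).

End Syntax.

(* Main.v *)
Require Import Defs.
From Stdlib Require Import Classical Lia.

Section S.
Variable A : Type.

Fixpoint csat (X : nat -> A -> Prop) (lam : option nat) (tau : nat -> nat)
    (k : nat) (f : iformula A) {struct f} : Prop :=
  match f with
  | IAtom p => X k p
  | IBot _ => False
  | ITop _ => True
  | IAnd f1 f2 => csat X lam tau k f1 /\ csat X lam tau k f2
  | IOr f1 f2 => csat X lam tau k f1 \/ csat X lam tau k f2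
  | IPrev J f1 => 0 < k /\ csat X lam tau (k - 1) f1 /\ in_int J (tau k - tau (k - 1))
  | IWPrev J f1 => (0 < k /\ csat X lam tau (k - 1) f1 /\ in_int J (tau k - tau (k - 1)))
      \/ ~ (0 < k /\ in_int J (tau k - tau (k - 1)))
  | ISince J f1 f2 =>
      exists j, j <= k /\ in_int J (tau k - tau j) /\ csat X lam tau j f2 /\
        forall i, j < i -> i <= k -> csat X lam tau i f1
  | ITrigger J f1 f2 =>
      forall j, j <= k -> in_int J (tau k - tau j) ->
        csat X lam tau j f2 \/ exists i, j < i /\ i <= k /\ csat X lam tau i f1
  | INext J f1 =>
      in_trace lam (k + 1) /\ csat X lam tau (k + 1) f1 /\
      in_int J (tau (k + 1) - tau k)
  | IWNext J f1 =>
      (in_trace lam (k + 1) /\ csat X lam tau (k + 1) f1 /\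
      in_int J (tau (k + 1) - tau k)) \/
      ~ (in_trace lam (k + 1) /\ in_int J (tau (k + 1) - tau k))
  | IUntil J f1 f2 =>
      exists j, k <= j /\ in_trace lam j /\ in_int J (tau j - tau k) /\
        csat X lam tau j f2 /\ forall i, k <= i -> i < j -> csat X lam tau i f1
  | IRelease J f1 f2 =>
      forall j, k <= j -> in_trace lam j -> in_int J (tau j - tau k) ->
        csat X lam tau j f2 \/ exists i, k <= i /\ i < j /\ csat X lam tau i f1
  end.

Lemma sat_top H T lam tau k : sat H T lam tau k (Top A).
Proof. simpl; tauto. Qed.

Lemma sat_csat H T lam tau f : forall k,
  sat H T lam tau k (emb f) <-> csat H lam tau k f.
Proof.
  induction f as [| | |f1 IHf1 f2 IHf2|f1 IHf1 f2 IHf2|J f IHf|J f IHf|J f1 IHf1 f2 IHf2|J f1 IHf1 f2 IHf2|J f IHf|J f IHf|J f1 IHf1 f2 IHf2|J f1 IHf1 f2 IHf2]; intro k; simpl; try tauto.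
  - rewrite IHf1, IHf2; tauto.
  - rewrite IHf1, IHf2; tauto.
  - rewrite IHf; tauto.
  - rewrite IHf. split.
    + intros [h|[h1 h2]]; [left; exact h|right; intro c; apply h1; tauto].
    + intros [h|h]; [left; exact h|right; split; intros c; apply h; tauto].
  - split; intros [j (a&b&c&d)]; exists j; (split;[exact a|split;[exact b|split;[apply IHf2; exact c|]]]);
      intros; apply IHf1; apply d; auto.
  - split; intros Hj j a b; destruct (Hj j a b) as [h|[i hi]];
      [left; apply IHf2; exact h | right; exists i; rewrite <- IHf1; tauto
      |left; apply IHf2; exact h | right; exists i; rewrite IHf1; tauto].
  - rewrite IHf; tauto.
  - rewrite IHf. split.
    + intros [h|[h1 h2]]; [left; exact h|right; intro c; apply h1; tauto].
    + intros [h|h]; [left; exact h|right; split; intros c; apply h; tauto].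
  - split; intros [j (a&b&b'&c&d)]; exists j; (split;[exact a|split;[exact b|split;[exact b'|split;[apply IHf2; exact c|]]]]);
      intros; apply IHf1; apply d; auto.
  - split; intros Hj j a b c; destruct (Hj j a b c) as [h|[i hi]];
      [left; apply IHf2; exact h | right; exists i; rewrite <- IHf1; tauto
      |left; apply IHf2; exact h | right; exists i; rewrite IHf1; tauto].
Qed.

Lemma csat_dual X lam tau f : forall k,
  csat X lam tau k (delta f) <-> ~ csat (fun i p => ~ X i p) lam tau k f.
Proof.
  induction f; intro k; simpl.
  - split; [tauto| apply NNPP].
  - tauto.
  - tauto.
  - rewrite IHf1, IHf2; tauto.
  - rewrite IHf1, IHf2; tauto.
  - rewrite IHf. destruct (classic (0 < k)); destruct (classic (in_int i (tau k - tau (k-1)))); tauto.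
  - rewrite IHf. destruct (classic (0 < k)); destruct (classic (in_int i (tau k - tau (k-1)))); tauto.
  - split.
    + intros Ht [j [a [b [c d]]]]. destruct (Ht j a b) as [h|[i0 [e [g h]]]].
      * apply IHf2 in h; tauto.
      * apply IHf1 in h; apply h; apply d; auto.
    + intros Hn j a b. destruct (classic (csat X lam tau j (delta f2))) as [h|h]; [left; exact h|right].
      apply NNPP; intro Hc. apply Hn. exists j. split; [exact a|split;[exact b|split]].
      * apply NNPP; intro c; apply h; apply IHf2; exact c.
      * intros i0 e g. apply NNPP; intro c. apply Hc. exists i0. split; [exact e|split;[exact g|apply IHf1; exact c]].
  - split.
    + intros [j [a [b [c d]]]] Ht. destruct (Ht j a b) as [h|[i0 [e [g h]]]].
      * apply IHf2 in c; tauto.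
      * apply (IHf1 i0) in h; auto.
    + intros Hn. apply NNPP; intro Hc. apply Hn. intros j a b.
      destruct (classic (csat (fun i p => ~ X i p) lam tau j f2)) as [h|h]; [left; exact h|right].
      apply NNPP; intro Hd. apply Hc. exists j. split; [exact a|split;[exact b|split]].
      * apply IHf2; exact h.
      * intros i0 e g. apply IHf1. intro c. apply Hd. exists i0; auto.
  - rewrite IHf. destruct (classic (in_trace lam (k+1))); destruct (classic (in_int i (tau (k+1) - tau k))); tauto.
  - rewrite IHf. destruct (classic (in_trace lam (k+1))); destruct (classic (in_int i (tau (k+1) - tau k))); tauto.
  - split.
    + intros Ht [j [a [b [c [c' d]]]]]. destruct (Ht j a b c) as [h|[i0 [e [g h]]]].
      * apply IHf2 in h; tauto.
      * apply IHf1 in h; apply h; apply d; auto.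
    + intros Hn j a b b'. destruct (classic (csat X lam tau j (delta f2))) as [h|h]; [left; exact h|right].
      apply NNPP; intro Hc. apply Hn. exists j. split; [exact a|split;[exact b|split;[exact b'|split]]].
      * apply NNPP; intro c; apply h; apply IHf2; exact c.
      * intros i0 e g. apply NNPP; intro c. apply Hc. exists i0. split; [exact e|split;[exact g|apply IHf1; exact c]].
  - split.
    + intros [j [a [b [b' [c d]]]]] Ht. destruct (Ht j a b b') as [h|[i0 [e [g h]]]].
      * apply IHf2 in c; tauto.
      * apply (IHf1 i0) in h; auto.
    + intros Hn. apply NNPP; intro Hc. apply Hn. intros j a b b'.
      destruct (classic (csat (fun i p => ~ X i p) lam tau j f2)) as [h|h]; [left; exact h|right].
      apply NNPP; intro Hd. apply Hc. exists j. split; [exact a|split;[exact b|split;[exact b'|split]]].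
      * apply IHf2; exact h.
      * intros i0 e g. apply IHf1. intro c. apply Hd. exists i0; auto.
Qed.

Lemma delta_invol (f : iformula A) : delta (delta f) = f.
Proof. induction f; simpl; congruence. Qed.

Definition mk (X : nat -> A -> Prop) (M : htrace A) : htrace A :=
  @HTrace A X X (trlam M) (trtau M) (tr_nonempty M) (fun i p _ h => h)
    (tr_tau0 M) (tr_mono M).

Definition ceq (f g : iformula A) : Prop :=
  forall (M : htrace A) k, in_trace (trlam M) k ->
    (csat (trH M) (trlam M) (trtau M) k f <-> csat (trH M) (trlam M) (trtau M) k g).

Lemma mht_ceq f g : mht_equiv (emb f) (emb g) <-> ceq f g.
Proof.
  unfold mht_equiv, ceq, msat. split.
  - intros H M k hk. destruct (H M k hk) as [[h1 _] [h2 _]].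
    rewrite <- !sat_csat with (T := trT M). tauto.
  - intros H M k hk. simpl.
    pose proof (H M k hk) as e1.
    pose proof (H (mk (trT M) M) k hk) as e2. simpl in e2.
    rewrite !sat_csat. tauto.
Qed.

Lemma ceq_dual f g : ceq f g -> ceq (delta f) (delta g).
Proof.
  intros H M k hk. rewrite !csat_dual.
  pose proof (H (mk (fun i p => ~ trH M i p) M) k hk) as e. simpl in e. tauto.
Qed.

End S.

Theorem corollary3 (A : Type) (phi psi : iformula A) :
  mht_equiv (emb phi) (emb psi) <->
  mht_equiv (emb (delta phi)) (emb (delta psi)).
Proof.
  rewrite !mht_ceq. split.
  - apply ceq_dual.
  - intro h. apply ceq_dual in h. rewrite !delta_invol in h. exact h.
Qed.
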